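(* Let $W$ be an ordered vector space which is monotone complete and which carries a faithful normal positive linear functional. Then every vector subspace $V$ of $W$ which is monotone sequentially closed in $W$ is monotone closed in $W$.
   Context: An ordered vector space $W$ is called monotone complete if every non-empty upper bounded upward directed subset of $W$ has a supremum in $W$ (in particular every upper bounded increasing sequence in $W$ has a supremum in $W$). For a vector subspace $V$ of such $W$: $V$ is monotone closed in $W$ if $V$ contains the supremum in $W$ of every non-empty upward directed subset of $V$ that is upper bounded in $W$; $V$ is monotone sequentially closed in $W$ if $V$ contains the supremum in $W$ of every increasing sequence in $V$ that is upper bounded in $W$. A positive linear functional $\psi$ on $W$ is faithful if $\psi(a)>0$ for every positive $a\neq 0$ in $W$, and normal if $\psi(\sup J)=\sup_{j\in J}\psi(j)$ for every non-empty upper bounded upward directed subset $J$ of $W$. *)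

(* Defs.v *)
From HB Require Import structures.
From mathcomp Require Import all_boot all_order all_algebra.
From mathcomp Require Import reals.
Set Implicit Arguments. Unset Strict Implicit. Unset Printing Implicit Defensive.
Import Order.TTheory GRing.Theory Num.Theory.
Local Open Scope ring_scope.

Definition ordered_vector_space (R : realType) (W : lmodType R) (le : W -> W -> Prop) : Prop :=
  [/\ (forall x, le x x),
      (forall x y, le x y -> le y x -> x = y),
      (forall x y z, le x y -> le y z -> le x z),
      (forall x y z, le x y -> le (x + z) (y + z)) &
      (forall (t : R) x y, 0 <= t -> le x y -> le (t *: x) (t *: y))].

Definition upper_bound (T : Type) (le : T -> T -> Prop) (A : T -> Prop) (b : T) : Prop :=
  forall a, A a -> le a b.
Definition upper_bounded (T : Type) (le : T -> T -> Prop) (A : T -> Prop) : Prop :=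
  exists b, upper_bound le A b.
Definition is_supremum (T : Type) (le : T -> T -> Prop) (A : T -> Prop) (s : T) : Prop :=
  upper_bound le A s /\ (forall b, upper_bound le A b -> le s b).
Definition upward_directed (T : Type) (le : T -> T -> Prop) (A : T -> Prop) : Prop :=
  forall x y, A x -> A y -> exists2 z, A z & le x z /\ le y z.
Definition nonempty (T : Type) (A : T -> Prop) : Prop := exists x, A x.
Definition increasing_seq (T : Type) (le : T -> T -> Prop) (u : nat -> T) : Prop :=
  forall n, le (u n) (u n.+1).

Definition monotone_complete (T : Type) (le : T -> T -> Prop) : Prop :=
  forall J : T -> Prop, nonempty J -> upward_directed le J -> upper_bounded le J ->
    exists s, is_supremum le J s.

Definition subspace (R : realType) (W : lmodType R) (V : W -> Prop) : Prop :=
  V 0 /\ (forall (a : R) u v, V u -> V v -> V (a *: u + v)).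

Definition monotone_closed (R : realType) (W : lmodType R) (le : W -> W -> Prop)
    (V : W -> Prop) : Prop :=
  forall J : W -> Prop, nonempty J -> (forall x, J x -> V x) -> upward_directed le J ->
    upper_bounded le J -> forall s, is_supremum le J s -> V s.

Definition monotone_seq_closed (R : realType) (W : lmodType R) (le : W -> W -> Prop)
    (V : W -> Prop) : Prop :=
  forall u : nat -> W, (forall n, V (u n)) -> increasing_seq le u ->
    upper_bounded le (fun x => exists n, x = u n) ->
    forall s, is_supremum le (fun x => exists n, x = u n) s -> V s.

Definition positive_linear_functional (R : realType) (W : lmodType R) (le : W -> W -> Prop)
    (psi : W -> R) : Prop :=
  (forall (a : R) x y, psi (a *: x + y) = a * psi x + psi y) /\
  (forall x, le 0 x -> 0 <= psi x).

Definition faithful (R : realType) (W : lmodType R) (le : W -> W -> Prop) (psi : W -> R) : Prop :=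
  forall a, le 0 a -> a != 0 -> 0 < psi a.

Definition normal (R : realType) (W : lmodType R) (le : W -> W -> Prop) (psi : W -> R) : Prop :=
  forall J : W -> Prop, nonempty J -> upward_directed le J -> upper_bounded le J ->
    forall s, is_supremum le J s ->
      is_supremum (fun a b : R => a <= b) (fun r => exists2 j, J j & r = psi j) (psi s).

(* Main.v *)
Require Import Defs.
From HB Require Import structures.
From mathcomp Require Import all_boot all_order all_algebra.
From mathcomp Require Import reals.
From Stdlib Require Import Classical ClassicalEpsilon.
Import Order.TTheory GRing.Theory Num.Theory.
Local Open Scope ring_scope.

Theorem corollary1 (R : realType) (W : lmodType R) (le : W -> W -> Prop)
  (psi : W -> R) :
  ordered_vector_space le ->
  monotone_complete le ->
  positive_linear_functional le psi -> faithful le psi -> normal le psi ->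
  forall V : W -> Prop, subspace V -> monotone_seq_closed le V -> monotone_closed le V.
Proof.
move=> [lerefl leanti letrans leadd lescale] mc [plin ppos] pfaith pnorm V _ Vseq.
move=> J [j0 Jj0] JV Jdir Jub s [sub ssup].
have psiB : forall x y, psi (y - x) = psi y - psi x.
  move=> x y; have -> : y - x = (-1) *: x + y by rewrite scaleN1r addrC.
  by rewrite plin mulN1r addrC.
have le0B : forall x y, le x y -> le 0 (y - x).
  move=> x y /(leadd _ _ (- x)); rewrite subrr //.
have psile : forall x y, le x y -> psi x <= psi y.
  move=> x y /le0B /ppos; rewrite psiB subr_ge0 //.
have [_ supJ] := pnorm J (ex_intro _ j0 Jj0) Jdir Jub s (conj sub ssup).
have approx : forall n : nat, exists j, J j /\ psi s - (n.+1%:R)^-1 < psi j.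
  move=> n; apply: NNPP => hn.
  have : psi s <= psi s - (n.+1%:R)^-1.
    apply: supJ => r [j Jj ->]; rewrite leNgt; apply/negP => hlt.
    by apply: hn; exists j.
  by rewrite lerBrDr gerDl leNgt invr_gt0 ltr0Sn.
pose f n := proj1_sig (constructive_indefinite_description _ (approx n)).
have fP : forall n, J (f n) /\ psi s - (n.+1%:R)^-1 < psi (f n).
  move=> n; exact: (proj2_sig (constructive_indefinite_description _ (approx n))).
have gex : forall x y, exists z, J x -> J y -> J z /\ le x z /\ le y z.
  move=> x y; case: (classic (J x /\ J y)) => [[Jx Jy]|hn].
    by have [z Jz hz] := Jdir x y Jx Jy; exists z.
  by exists x => Jx Jy; case: hn.
pose g x y := proj1_sig (constructive_indefinite_description _ (gex x y)).
have gP : forall x y, J x -> J y -> J (g x y) /\ le x (g x y) /\ le y (g x y).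
  move=> x y; exact: (proj2_sig (constructive_indefinite_description _ (gex x y))).
pose u := fix u n := if n is m.+1 then g (u m) (f m.+1) else f 0.
have uJ : forall n, J (u n) /\ le (f n) (u n).
  elim=> [|n [IH1 IH2]] /=; first by split; [exact: (fP 0).1 | exact: lerefl].
  have [h1 [h2 h3]] := gP _ _ IH1 (fP n.+1).1; by split.
have uinc : increasing_seq le u.
  by move=> n /=; have [h1 [h2 h3]] := gP _ _ (uJ n).1 (fP n.+1).1.
have umon : forall n m, (n <= m)%N -> le (u n) (u m).
  move=> n m /subnK <-; elim: (m - n)%N => [|k IH]; first by rewrite add0n; exact: lerefl.
  by rewrite addSn; apply: letrans IH (uinc _).
pose U := fun x => exists n, x = u n.
have Uub : upper_bound le U s by move=> x [n ->]; apply: sub; exact: (uJ n).1.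
have [t [tub tsup]] : exists t, is_supremum le U t.
  apply: mc; first by exists (u 0), 0%N.
    move=> x y [n ->] [m ->]; exists (u (maxn n m)); first by exists (maxn n m).
    by split; apply: umon; rewrite ?leq_maxl ?leq_maxr.
  by exists s.
have Vt : V t.
  apply: (Vseq u) => //; first by move=> n; apply: JV; exact: (uJ n).1.
  by exists s.
have ts : le t s := tsup s Uub.
have pst : psi s <= psi t.
  rewrite leNgt; apply/negP => hlt.
  set d := psi s - psi t.
  have d0 : 0 < d by rewrite subr_gt0.
  set n := Num.Def.archi_bound d^-1.
  have hn : d^-1 < n.+1%:R.
    apply: lt_trans (archi_boundP _) _; first by rewrite invr_ge0 ltW.
    by rewrite ltr_nat.
  have hn' : (n.+1%:R)^-1 < d.
    by rewrite -(invrK d) ltf_pV2 ?posrE ?invr_gt0 ?ltr0Sn.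
  have h1 := (fP n).2.
  have h2 : psi (f n) <= psi t.
    apply: le_trans (psile _ _ (uJ n).2) _; apply: psile; apply: tub; by exists n.
  have : psi s - (n.+1%:R)^-1 < psi t by apply: lt_le_trans h1 h2.
  rewrite ltrBlDr -ltrBlDl => /lt_trans /(_ hn'); by rewrite ltxx.
have : s - t = 0.
  apply: NNPP => hne.
  have := pfaith _ (le0B _ _ ts) (introN eqP hne).
  by rewrite psiB subr_gt0 ltNge pst.
by move/eqP; rewrite subr_eq0 => /eqP ->.
Qed.
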